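(* Let $v \ge 360$ be an integer. Then \[ \beta(5,v,4) \le \left\lfloor \frac{5v-15}{3} \right\rfloor, \] and \[ \beta(5,v,4) \ge \begin{cases} \frac{5v-27}{3} & \text{if } v \equiv 0 \pmod 3,\\ \frac{5v-32}{3} & \text{if } v \equiv 1 \pmod 3,\\ \frac{5v-22}{3} & \text{if } v \equiv 2 \pmod 3. \end{cases} \]
   Context: For integers $v \ge k \ge 2$, a $(v,k)$-packing is a pair $(X,\mathcal{B})$ where $X$ is a set of $v$ points and $\mathcal{B}$ is a set of $k$-subsets of $X$ (blocks) such that every pair of distinct points lies in at most one block. A partial parallel class (PPC) is a set of pairwise disjoint blocks; its size is the number of blocks. A PPC of size $\rho$ is maximum if the packing has no PPC of size $\rho+1$. $\beta(\rho,v,k)$ denotes the maximum number of blocks in a $(v,k)$-packing in which the maximum PPC has size $\rho$. *)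

(* Defs.v *)
From mathcomp Require Import all_boot.
Set Implicit Arguments. Unset Strict Implicit. Unset Printing Implicit Defensive.

Definition packing (v k : nat) (B : {set {set 'I_v}}) : bool :=
  [forall b in B, #|b| == k] &&
  [forall x : 'I_v, forall y : 'I_v,
     (x != y) ==> (#|[set b in B | (x \in b) && (y \in b)]| <= 1)].

Definition ppc (v : nat) (P : {set {set 'I_v}}) : bool :=
  [forall b1 in P, forall b2 in P, (b1 != b2) ==> [disjoint b1 & b2]].

Definition has_ppc (v : nat) (B : {set {set 'I_v}}) (s : nat) : bool :=
  [exists P : {set {set 'I_v}}, [&& P \subset B, ppc P & #|P| == s]].

Definition max_ppc_size (v : nat) (B : {set {set 'I_v}}) (rho : nat) : bool :=
  has_ppc B rho && ~~ has_ppc B rho.+1.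

(* beta(rho,v,k): maximum number of blocks of a (v,k)-packing whose maximum
   PPC has size rho (0 if no such packing exists). *)
Definition beta (rho v k : nat) : nat :=
  \max_(B : {set {set 'I_v}} | packing k B && max_ppc_size B rho) #|B|.

(* Main.v *)
Require Import Defs.
From mathcomp Require Import all_boot.
From mathcomp Require Import zify.
Set Implicit Arguments. Unset Strict Implicit. Unset Printing Implicit Defensive.

Lemma sub_card (T : finType) (A : {set T}) k :
  k <= #|A| -> exists2 X : {set T}, X \subset A & #|X| = k.
Proof.
elim: k => [|k IH] hk; first by exists set0; rewrite ?sub0set ?cards0.
have [X XA cX] := IH (ltnW hk).
have : X \proper A by rewrite properEcard XA cX hk.
case/properP=> _ [x xA xX].
exists (x |: X); first by rewrite subUset sub1set xA XA.
by rewrite cardsU1 xX cX.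
Qed.

Lemma card_bigcup_le (T I : finType) (X : {set I}) (F : I -> {set T}) :
  #|\bigcup_(i in X) F i| <= \sum_(i in X) #|F i|.
Proof.
elim/big_rec2: _ => [|i A n _ h]; first by rewrite cards0.
apply: leq_trans (leq_card_setU _ _) _; lia.
Qed.

Lemma sum_disj (T I : finType) (X : {set I}) (g : I -> {set T}) (U : {set T}) :
  (forall i j, i \in X -> j \in X -> i != j -> [disjoint g i & g j]) ->
  (forall i, i \in X -> g i \subset U) -> \sum_(i in X) #|g i| <= #|U|.
Proof.
move: {2}#|X| (erefl #|X|) => n; elim: n X U => [|n IH] X U cX hd hs.
  by move/eqP: cX; rewrite cards_eq0 => /eqP ->; rewrite big_set0.
have : 0 < #|X| by rewrite cX.
case/card_gt0P => x xX.
rewrite (bigD1 x) //=.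
have -> : \sum_(i in X | i != x) #|g i| = \sum_(i in X :\ x) #|g i|.
  by apply: eq_bigl => i; rewrite !inE andbC.
have h1 : \sum_(i in X :\ x) #|g i| <= #|U :\: g x|.
  apply: IH.
  - by rewrite (cardsD1 x X) xX in cX; case: cX.
  - by move=> i j; rewrite !inE => /andP[_ iX] /andP[_ jX]; apply: hd.
  move=> i; rewrite !inE => /andP[ix iX]; rewrite subsetD hs //=.
  by have := hd _ _ iX xX ix.
have := cardsID (g x) U; rewrite (setIidPr (hs _ xX)); lia.
Qed.

Lemma disjP (T : finType) (A B : {set T}) :
  reflect (forall x, x \in A -> x \in B -> False) [disjoint A & B].
Proof.
rewrite -setI_eq0; apply: (iffP eqP) => [h x xa xb | h].
  have : x \in A :&: B by rewrite inE xa xb.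
  by rewrite h inE.
apply/setP => x; rewrite !inE; apply/negbTE/negP => /andP[]; exact: h.
Qed.

Lemma ppcP v (Q : {set {set 'I_v}}) :
  reflect {in Q &, forall b1 b2 : {set 'I_v}, b1 != b2 -> [disjoint b1 & b2]} (ppc Q).
Proof.
apply: (iffP forall_inP) => [h b1 b2 h1 h2 ne | h b1 h1].
  by have /forall_inP/(_ _ h2)/implyP := h _ h1; apply.
by apply/forall_inP => b2 h2; apply/implyP; apply: h.
Qed.

Lemma cover_U1 v (c : {set 'I_v}) Q : cover (c |: Q) = c :|: cover Q.
Proof. by rewrite /cover bigcup_setU big_set1. Qed.

Lemma ext v (Q : {set {set 'I_v}}) c :
  ppc Q -> c != set0 -> [disjoint c & cover Q] ->
  ppc (c |: Q) /\ #|c |: Q| = #|Q|.+1.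
Proof.
move=> /ppcP hQ /set0Pn [x xc] hd.
have cQ : c \notin Q.
  apply/negP => cq; move/disjP: hd => hd; apply: (hd x xc).
  by rewrite /cover; apply/bigcupP; exists c.
split; last by rewrite cardsU1 cQ.
apply/ppcP => b1 b2; rewrite !inE => /orP[/eqP -> | h1] /orP[/eqP -> | h2] ne.
- by rewrite eqxx in ne.
- apply/disjP => y yc yb; move/disjP: hd => hd; apply: (hd y yc).
  by rewrite /cover; apply/bigcupP; exists b2.
- rewrite disjoint_sym; apply/disjP => y yc yb; move/disjP: hd => hd; apply: (hd y yc).
  by rewrite /cover; apply/bigcupP; exists b1.
- exact: hQ.
Qed.

Definition Aset v (B P : {set {set 'I_v}}) x :=
  [set c in B | c :&: cover P == [set x]].
Definition star v (B : {set {set 'I_v}}) x := [set c in B | x \in c].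
Definition pblk v (B : {set {set 'I_v}}) (X : {set 'I_v}) := [set c in B | X \subset c].
Definition good v (B P : {set {set 'I_v}}) :=
  [&& packing 4 B, P \subset B, ppc P, #|P| == 5 & ~~ has_ppc B 6].

Lemma blk_card v (B P : {set {set 'I_v}}) c : good B P -> c \in B -> #|c| = 4.
Proof.
by case/and5P => /andP[/forall_inP h _] _ _ _ _ /h /eqP.
Qed.

Lemma pack_eq v (B P : {set {set 'I_v}}) c c' x y : good B P ->
  c \in B -> c' \in B -> x != y -> x \in c -> y \in c -> x \in c' -> y \in c' -> c = c'.
Proof.
case/and5P => /andP[_ /forallP /(_ x) /forallP /(_ y) /implyP h] _ _ _ _ cB c'B xy xc yc xc' yc'.
have /card_le1_eqP := h xy; apply; by rewrite inE ?cB ?c'B ?xc ?yc ?xc' ?yc'.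
Qed.

Lemma no6 v (B P Q : {set {set 'I_v}}) : good B P ->
  Q \subset B -> ppc Q -> #|Q| = 6 -> False.
Proof.
case/and5P => _ _ _ _ /negP h QB pQ cQ; apply: h.
by apply/existsP; exists Q; rewrite QB pQ cQ.
Qed.

Lemma meetS v (B P : {set {set 'I_v}}) c : good B P -> c \in B ->
  c :&: cover P != set0.
Proof.
move=> g cB; apply/negP => /eqP h.
have [pc cc] : ppc (c |: P) /\ #|c |: P| = #|P|.+1.
  apply: ext.
  - by case/and5P: g.
  - by rewrite -card_gt0 (blk_card g cB).
  - by rewrite -setI_eq0 h.
apply: (no6 g _ pc); last by move: g cc => /and5P[_ _ _ /eqP -> _].
by rewrite subUset sub1set cB; case/and5P: g.
Qed.

Lemma A_props v (B P : {set {set 'I_v}}) x a : a \in Aset B P x ->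
  [/\ a \in B, a :&: cover P = [set x], x \in a & x \in cover P].
Proof.
rewrite inE => /andP[aB /eqP h].
have : x \in a :&: cover P by rewrite h set11.
by rewrite inE => /andP[].
Qed.

Lemma A_le1 v (B P : {set {set 'I_v}}) x p : good B P -> p != x ->
  #|[set a in Aset B P x | p \in a]| <= 1.
Proof.
move=> g px; apply/card_le1_eqP => a a' /setIdP[ha pa] /setIdP[ha' pa'].
have [aB _ xa _] := A_props ha; have [a'B _ xa' _] := A_props ha'.
by rewrite (pack_eq g aB a'B px pa xa pa' xa').
Qed.

Lemma greedy v (B P : {set {set 'I_v}}) x (F : {set 'I_v}) : good B P -> x \notin F ->
  #|F| < #|Aset B P x| -> exists2 a, a \in Aset B P x & [disjoint a & F].
Proof.
move=> g xF hc.
set Bad := \bigcup_(p in F) [set a in Aset B P x | p \in a].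
have hB : #|Bad| <= #|F|.
  apply: leq_trans (card_bigcup_le _ _) _.
  rewrite -sum1_card; apply: leq_sum => p pF; apply: A_le1 => //.
  by apply: contraNneq xF => <-.
have : ~~ (Aset B P x \subset Bad).
  by apply/negP => /subset_leq_card; lia.
case/subsetPn => a aA aBad; exists a => //.
apply/disjP => p pa pF; apply/negP: aBad; apply/negPn.
by apply/bigcupP; exists p => //; apply/setIdP.
Qed.

Lemma A_out v (B P : {set {set 'I_v}}) x a : good B P -> a \in Aset B P x ->
  #|a :\: cover P| = 3.
Proof.
move=> g ha; have [aB h _ _] := A_props ha.
have := cardsID (cover P) a; rewrite h cards1 (blk_card g aB); lia.
Qed.

Lemma arith1 x s K : x + 3 * s.+1 <= K + 2 -> x < K.
Proof. lia. Qed.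

Lemma arith2 U X s K : U <= 3 + X -> X + 3 * s.+1 <= K + 2 -> U + 3 * s <= K + 2.
Proof. lia. Qed.

Lemma greedy_seq v (B P : {set {set 'I_v}}) K (hs : seq 'I_v) (Q : {set {set 'I_v}}) :
  good B P -> uniq hs ->
  (forall h, h \in hs -> h \in cover P /\ K <= #|Aset B P h|) ->
  (forall h, h \in hs -> h \notin cover Q) ->
  Q \subset B -> ppc Q ->
  #|cover Q :\: cover P| + 3 * size hs <= K + 2 ->
  exists2 Q' : {set {set 'I_v}}, Q' \subset B & ppc Q' /\ #|Q'| = #|Q| + size hs.
Proof.
move=> g; elim: hs Q => [|h hs IH] Q /= uh hh hQ QB pQ hc.
  by exists Q => //; rewrite addn0.
case/andP: uh => hhs uh.
have [hS hK] := hh h (mem_head _ _).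
have hFK := arith1 hc.
set F := cover Q :\: cover P.
have hF : h \notin F by rewrite inE hS.
have [a aA aF] := greedy g hF (leq_trans hFK hK).
have [aB aS ha _] := A_props aA.
have dQ : [disjoint a & cover Q].
  apply/disjP => p pa pQc.
  case pS : (p \in cover P).
    have : p \in a :&: cover P by rewrite inE pa pS.
    rewrite aS inE => /eqP ph; subst p.
    by move: (hQ h (mem_head _ _)); rewrite pQc.
  by move/disjP: aF => aF; apply: (aF p pa); rewrite inE pQc pS.
have a0 : a != set0 by apply/set0Pn; exists h.
have [pQ1 cQ1] := ext pQ a0 dQ.
have h1 : forall h', h' \in hs -> h' \in cover P /\ K <= #|Aset B P h'|.
  by move=> h' hh'; apply: hh; rewrite inE hh' orbT.
have h2 : forall h', h' \in hs -> h' \notin cover (a |: Q).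
  move=> h' hh'; rewrite cover_U1 inE negb_or (hQ h' _) ?inE ?hh' ?orbT // andbT.
  have [h'S _] := h1 h' hh'.
  apply/negP => h'a.
  have : h' \in a :&: cover P by rewrite inE h'a h'S.
  rewrite aS inE => /eqP eh; subst h'.
  by rewrite hh' in hhs.
have h3 : a |: Q \subset B by rewrite subUset sub1set aB QB.
have h4 : #|cover (a |: Q) :\: cover P| + 3 * size hs <= K + 2.
  rewrite cover_U1 setDUl.
  have hu : #|(a :\: cover P) :|: (cover Q :\: cover P)| <= 3 + #|cover Q :\: cover P|.
    by rewrite -(A_out g aA); apply: leq_card_setU.
  exact: arith2 hu hc.
have [Q' Q'B [pQ' cQ']] := IH (a |: Q) uh h1 h2 h3 pQ1 h4.
by exists Q' => //; rewrite cQ' cQ1 addSnnS.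
Qed.

Lemma gP v (B P : {set {set 'I_v}}) : good B P ->
  [/\ packing 4 B, P \subset B, ppc P, #|P| = 5 & ~~ has_ppc B 6].
Proof. by case/and5P => ? ? ? /eqP ? ?. Qed.

Lemma cover_sub v (Q R : {set {set 'I_v}}) : Q \subset R -> cover Q \subset cover R.
Proof.
move=> /subsetP h; apply/subsetP => p /bigcupP [q qQ pq].
by apply/bigcupP; exists q => //; apply: h.
Qed.

Lemma mem_cover v (Q : {set {set 'I_v}}) b p : b \in Q -> p \in b -> p \in cover Q.
Proof. by move=> bQ pb; apply/bigcupP; exists b. Qed.

Lemma ppc_sub v (Q R : {set {set 'I_v}}) : Q \subset R -> ppc R -> ppc Q.
Proof.
move=> /subsetP h /ppcP pR; apply/ppcP => b1 b2 h1 h2; apply: pR; exact: h.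
Qed.

Lemma ppc_same v (Q : {set {set 'I_v}}) b b' p : ppc Q -> b \in Q -> b' \in Q ->
  p \in b -> p \in b' -> b = b'.
Proof.
move=> /ppcP pQ bQ b'Q pb pb'; apply/eqP; apply/negPn/negP => ne.
by move/disjP: (pQ _ _ bQ b'Q ne) => /(_ p pb pb').
Qed.

Lemma cover_card v (B P : {set {set 'I_v}}) : good B P -> #|cover P| <= 20.
Proof.
move=> g; have [_ PB _ cP _] := gP g.
apply: leq_trans (leq_card_cover P) _.
rewrite (eq_bigr (fun _ => 4)); first by rewrite sum_nat_const cP.
by move=> b bP; apply: (blk_card g); apply: (subsetP PB).
Qed.

Lemma star_deg v (B P : {set {set 'I_v}}) h : good B P -> 3 * #|star B h| <= v - 1.
Proof.
move=> g.
have e : \sum_(c in star B h) #|c :\ h| = 3 * #|star B h|.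
  rewrite mulnC -sum_nat_const; apply: eq_bigr => c; rewrite inE => /andP[cB hc].
  by have := cardsD1 h c; rewrite hc (blk_card g cB) add1n => -[<-].
have hU : #|[set~ h]| = v - 1 by rewrite cardsC1 card_ord subn1.
rewrite -e -hU; apply: sum_disj.
- move=> c c' /setIdP[cB hc] /setIdP[c'B hc'] ne; apply/disjP => p.
  rewrite !inE => /andP[ph pc] /andP[_ pc'].
  by move: ne; rewrite (pack_eq g cB c'B ph pc hc pc' hc') eqxx.
- by move=> c _; apply/subsetP => p; rewrite !inE => /andP[].
Qed.

Lemma pair_lemma v (B P : {set {set 'I_v}}) b x y : good B P -> b \in P ->
  x \in b -> y \in b -> x != y -> 4 <= #|Aset B P x| -> 0 < #|Aset B P y| -> False.
Proof.
move=> g bP xb yb xy hx /card_gt0P [cy cyA].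
have [_ PB pP cP _] := gP g.
have [cyB cyS ycy yS] := A_props cyA.
set Q0 := P :\ b.
have Q0P : Q0 \subset P by apply: subD1set.
have pQ0 := ppc_sub Q0P pP.
have cQ0 : #|Q0| = 4 by have := cardsD1 b P; rewrite bP cP add1n => -[<-].
have dis : forall p, p \in cover Q0 -> p \in b -> False.
  move=> p /bigcupP [q]; rewrite !inE => /andP[qb qP] pq pb.
  by move: qb; rewrite (ppc_same pP qP bP pq pb) eqxx.
have inS : forall p, p \in cover Q0 -> p \in cover P.
  by move=> p; apply/subsetP/cover_sub.
have d1 : [disjoint cy & cover Q0].
  apply/disjP => p pcy pQ.
  have : p \in cy :&: cover P by rewrite inE pcy inS.
  rewrite cyS inE => /eqP ep; subst p.
  exact: dis y pQ yb.
have cy0 : cy != set0 by apply/set0Pn; exists y.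
have [pQ1 cQ1] := ext pQ0 cy0 d1.
have xS : x \in cover P by apply: mem_cover bP xb.
have h1 : forall h, h \in [:: x] -> h \in cover P /\ 4 <= #|Aset B P h|.
  by move=> h; rewrite inE => /eqP ->.
have h2 : forall h, h \in [:: x] -> h \notin cover (cy |: Q0).
  move=> h; rewrite inE => /eqP ->; rewrite cover_U1 inE negb_or.
  apply/andP; split; apply/negP.
    move=> xcy; have : x \in cy :&: cover P by rewrite inE xcy xS.
    by rewrite cyS => /set1P exy; rewrite exy eqxx in xy.
  by move=> xQ; exact: dis x xQ xb.
have h3 : cy |: Q0 \subset B.
  by rewrite subUset sub1set cyB (subset_trans Q0P PB).
have h4 : #|cover (cy |: Q0) :\: cover P| + 3 * size [:: x] <= 4 + 2.
  rewrite cover_U1 setDUl.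
  have -> : cover Q0 :\: cover P = set0.
    by apply/eqP; rewrite setD_eq0; apply: cover_sub.
  by rewrite setU0 (A_out g cyA).
have [Q' Q'B [pQ' cQ']] := greedy_seq g (isT : uniq [:: x]) h1 h2 h3 pQ1 h4.
by apply: (no6 g Q'B pQ'); rewrite cQ' cQ1 cQ0.
Qed.

Definition Hv v (B P : {set {set 'I_v}}) := [set x in cover P | 16 <= #|Aset B P x|].

Lemma block_sum v (B P : {set {set 'I_v}}) b : good B P -> b \in P ->
  \sum_(x in b | x \notin Hv B P) #|Aset B P x| <= 15.
Proof.
move=> g bP.
have [_ PB _ _ _] := gP g.
have cb : #|b| = 4 by apply: (blk_card g); apply: (subsetP PB).
case: (boolP [exists x in b, 4 <= #|Aset B P x|]).
  case/exists_inP => x xb hx.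
  have z : forall y, y \in b -> y != x -> #|Aset B P y| = 0.
    move=> y yb yx; apply/eqP; rewrite -leqn0 leqNgt; apply/negP => hy.
    by apply: (pair_lemma g bP xb yb _ hx hy); rewrite eq_sym.
  have xS : x \in cover P by apply: mem_cover bP xb.
  case: (boolP (x \in Hv B P)) => xH.
    rewrite big1 // => y /andP[yb yH]; apply: z => //.
    by apply: contraNneq yH => ->.
  rewrite (bigD1 x) /=; last by rewrite xb xH.
  rewrite big1 ?addn0; last by move=> y /andP[/andP[yb _] yx]; apply: z.
  by move: xH; rewrite inE xS /= -ltnNge ltnS.
move=> hn.
rewrite big_mkcondr /=.
apply: (@leq_trans (\sum_(y in b) 3)); last by rewrite sum_nat_const cb.
apply: leq_sum => y yb; case: ifP => // _.
rewrite leqNgt; apply/negP => hy; move/negP: hn; apply.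
by apply/exists_inP; exists y.
Qed.

Lemma Hv_prop v (B P : {set {set 'I_v}}) h : h \in Hv B P ->
  h \in cover P /\ 16 <= #|Aset B P h|.
Proof. by rewrite inE => /andP[]. Qed.

Lemma cS3 v (B P : {set {set 'I_v}}) c : good B P -> c \in B -> #|c :\: cover P| <= 3.
Proof.
move=> g cB; have := meetS g cB; rewrite -card_gt0 => h.
have := cardsID (cover P) c; rewrite (blk_card g cB); lia.
Qed.

Lemma ppc1 v (c : {set 'I_v}) : ppc [set c].
Proof. by apply/ppcP => b1 b2; rewrite !inE => /eqP -> /eqP ->; rewrite eqxx. Qed.

Lemma avoid_contra v (B P : {set {set 'I_v}}) (Q : {set {set 'I_v}}) (Hs : {set 'I_v}) :
  good B P -> Hs \subset Hv B P -> Q \subset B -> ppc Q ->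
  [disjoint Hs & cover Q] ->
  #|cover Q :\: cover P| + 3 * #|Hs| <= 18 -> #|Q| + #|Hs| = 6 -> False.
Proof.
move=> g HsH QB pQ dQ hc hcard.
have h1 : forall h, h \in enum Hs -> h \in cover P /\ 16 <= #|Aset B P h|.
  by move=> h; rewrite mem_enum => hH; apply: Hv_prop; apply: (subsetP HsH).
have h2 : forall h, h \in enum Hs -> h \notin cover Q.
  by move=> h; rewrite mem_enum => hH; apply/negP => hQ; move/disjP: dQ => /(_ h hH hQ).
have h4 : #|cover Q :\: cover P| + 3 * size (enum Hs) <= 16 + 2.
  by rewrite -cardE.
have [Q' Q'B [pQ' cQ']] := greedy_seq g (enum_uniq _) h1 h2 QB pQ h4.
by apply: (no6 g Q'B pQ'); rewrite cQ' -cardE.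
Qed.

Lemma arithA s t : s + t = 4 -> 0 < s -> 3 <= s * t + 3 * (s == 4).
Proof. case: s => [|[|[|[|[|s]]]]] //=; lia. Qed.

Lemma ar1 a b : a <= 3 -> b = 5 -> a + 3 * b <= 18.
Proof. lia. Qed.
Lemma ar2 b : b = 5 -> 1 + b = 6.
Proof. lia. Qed.

Lemma caseA v (B P : {set {set 'I_v}}) (H5 : {set 'I_v}) : good B P ->
  H5 \subset Hv B P -> #|H5| = 5 -> 3 * #|B| <= 5 * (v - 5) + 3.
Proof.
move=> g H5H c5.
have [_ PB _ _ _] := gP g.
have meet : forall c, c \in B -> 0 < #|c :&: H5|.
  move=> c cB; rewrite card_gt0; apply/negP => /eqP h0.
  apply: (avoid_contra g H5H (_ : [set c] \subset B) (ppc1 c)).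
  - by rewrite sub1set.
  - by rewrite cover1 disjoint_sym -setI_eq0 h0.
  - by rewrite cover1; apply: ar1 (cS3 g cB) c5.
  - by rewrite cards1; apply: ar2 c5.
have st : forall h, h \in H5 -> \sum_(c in star B h) #|c :\: H5| <= v - 5.
  move=> h hH.
  have hU : #|~: H5| = v - 5.
    by have := cardsC H5; rewrite c5 => e; rewrite card_ord in e; lia.
  rewrite -hU; apply: sum_disj.
  - move=> c c' /setIdP[cB hc] /setIdP[c'B hc'] ne; apply/disjP => p.
    rewrite !inE => /andP[pH pc] /andP[_ pc'].
    have ph : p != h by apply: contraNneq pH => ->.
    by move: ne; rewrite (pack_eq g cB c'B ph pc hc pc' hc') eqxx.
  - by move=> c _; apply/subsetP => p; rewrite !inE => /andP[].
have e1 : \sum_(h in H5) \sum_(c in star B h) #|c :\: H5| =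
          \sum_(c in B) #|c :&: H5| * #|c :\: H5|.
  rewrite (exchange_big_dep (fun c => c \in B)) /=; last first.
    by move=> h c _; rewrite inE => /andP[].
  apply: eq_bigr => c cB; rewrite sum_nat_const; congr (_ * _).
  by apply: eq_card => h; rewrite unfold_in /= !inE cB andbC.
have hsum : \sum_(c in B) #|c :&: H5| * #|c :\: H5| <= 5 * (v - 5).
  rewrite -e1; apply: (@leq_trans (\sum_(h in H5) (v - 5))); first exact: leq_sum.
  by rewrite sum_nat_const c5.
have one : \sum_(c in B) (#|c :&: H5| == 4) <= 1.
  rewrite -big_mkcondr /= sum1_card.
  apply/card_le1_eqP => c c' /andP[cB /eqP h4] /andP[c'B /eqP h4'].
  have sc : c \subset H5.
    have /eqP <- : c :&: H5 == c by rewrite eqEcard subsetIl h4 (blk_card g cB).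
    exact: subsetIr.
  have sc' : c' \subset H5.
    have /eqP <- : c' :&: H5 == c' by rewrite eqEcard subsetIl h4' (blk_card g c'B).
    exact: subsetIr.
  have hu : #|c :|: c'| <= 5 by rewrite -c5; apply: subset_leq_card; rewrite subUset sc sc'.
  have := cardsUI c c'; rewrite (blk_card g cB) (blk_card g c'B) => hI.
  have : 1 < #|c :&: c'| by lia.
  case/card_gt1P => x [y [xI yI xy]].
  move: xI yI; rewrite !inE => /andP[xc xc'] /andP[yc yc'].
  by rewrite (pack_eq g c'B cB xy xc' yc' xc yc).
have per : forall c, c \in B -> 3 <= #|c :&: H5| * #|c :\: H5| + 3 * (#|c :&: H5| == 4).
  move=> c cB; apply: arithA; last exact: meet.
  by rewrite cardsID (blk_card g cB).
apply: (@leq_trans (\sum_(c in B) (#|c :&: H5| * #|c :\: H5| + 3 * (#|c :&: H5| == 4)))).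
  by rewrite -sum1_card big_distrr /=; apply: leq_sum => c cB; rewrite muln1; apply: per.
rewrite big_split /= -big_distrr /=.
by apply: leq_add => //; rewrite -[3]muln1 leq_mul2l.
Qed.

Lemma pblk_le1 v (B P : {set {set 'I_v}}) (X : {set 'I_v}) : good B P ->
  1 < #|X| -> #|pblk B X| <= 1.
Proof.
move=> g /card_gt1P [x [y [xX yX xy]]].
apply/card_le1_eqP => c c' /setIdP[cB /subsetP sc] /setIdP[c'B /subsetP sc'].
by rewrite (pack_eq g c'B cB xy (sc' _ xX) (sc' _ yX) (sc _ xX) (sc _ yX)).
Qed.

Lemma star_sum v (B P : {set {set 'I_v}}) (H : {set 'I_v}) : good B P ->
  3 * \sum_(h in H) #|star B h| <= #|H| * (v - 1).
Proof.
move=> g; rewrite big_distrr /= -sum_nat_const; apply: leq_sum => h _.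
exact: star_deg g.
Qed.

Lemma card_U3 v (B U1 U2 U3 : {set {set 'I_v}}) : B \subset U1 :|: U2 :|: U3 ->
  #|B| <= #|U1| + #|U2| + #|U3|.
Proof.
move=> /subset_leq_card h; apply: leq_trans h _.
apply: leq_trans (leq_card_setU _ _) _; rewrite leq_add2r; exact: leq_card_setU.
Qed.

Lemma other_pt v (c S : {set 'I_v}) x : x \in c :&: S -> c :&: S != [set x] ->
  exists2 y, y \in c :&: S & y != x.
Proof.
move=> xcS ne.
case: (boolP [exists y, (y \in c :&: S) && (y != x)]).
  by case/existsP => y /andP[]; exists y.
rewrite negb_exists => /forallP h; move/negP: ne; case.
apply/eqP/setP => y; rewrite [in RHS]inE; case: (boolP (y \in c :&: S)) => yi.
  by have := h y; rewrite yi /= negbK eq_sym.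
by apply/esym/negbTE; apply: contraNneq yi => ->.
Qed.

Lemma free_block v (B P : {set {set 'I_v}}) : good B P -> #|Hv B P| = 4 ->
  exists2 b, b \in P & [disjoint b & Hv B P].
Proof.
move=> g h4; have [_ _ pP cP _] := gP g.
case: (boolP [exists b in P, [disjoint b & Hv B P]]).
  by case/exists_inP => b bP d; exists b.
rewrite negb_exists_in => /forall_inP hn; exfalso.
have : \sum_(b in P) #|b :&: Hv B P| <= #|Hv B P|.
  apply: sum_disj; last by move=> b _; apply: subsetIr.
  move=> b b' bP b'P ne; apply/disjP => p; rewrite !inE => /andP[pb _] /andP[pb' _].
  by move: ne; rewrite (ppc_same pP bP b'P pb pb') eqxx.
have : \sum_(b in P) 1 <= \sum_(b in P) #|b :&: Hv B P|.
  by apply: leq_sum => b bP; rewrite card_gt0 setI_eq0; apply: hn.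
rewrite sum1_card cP h4; lia.
Qed.

Lemma ar3 a : a <= 3 -> a + 3 * 4 <= 18.
Proof. lia. Qed.
Lemma ar4 a b : b = 1 + a -> b <= 20 -> a <= 19.
Proof. lia. Qed.

Lemma caseB v (B P : {set {set 'I_v}}) : good B P -> #|Hv B P| = 4 ->
  3 * #|B| <= 4 * (v - 1) + 273.
Proof.
move=> g h4; have [_ PB pP cP _] := gP g.
set H := Hv B P.
have [b bP dbH] := free_block g h4.
have bB : b \in B by apply: (subsetP PB).
have bS : b \subset cover P by apply/subsetP => p; apply: mem_cover.
have meetb : forall c, c \in B -> [disjoint c & H] -> ~~ [disjoint c & b].
  move=> c cB dcH; apply/negP => dcb.
  have c0 : c != set0 by rewrite -card_gt0 (blk_card g cB).
  have dcb' : [disjoint c & cover [set b]] by rewrite cover1.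
  have [pQ cQ] := ext (ppc1 b) c0 dcb'.
  apply: (avoid_contra g (subxx H) (_ : c |: [set b] \subset B) pQ).
  - by rewrite subUset !sub1set cB bB.
  - rewrite cover_U1 cover1 disjoint_sym; apply/disjP => p pcb pH.
    move: pcb; rewrite inE => /orP[pc|pb].
      by move/disjP: dcH => /(_ p pc pH).
    by move/disjP: dbH => /(_ p pb pH).
  - rewrite cover_U1 cover1 setDUl.
    have -> : b :\: cover P = set0 by apply/eqP; rewrite setD_eq0.
    by rewrite setU0 h4; apply: ar3 (cS3 g cB).
  - by rewrite cQ cards1 h4.
set U1 := \bigcup_(h in H) star B h.
set U2 := \bigcup_(x in b) Aset B P x.
set U3 := \bigcup_(x in b) \bigcup_(y in cover P :\ x) pblk B [set x; y].
have sub : B \subset U1 :|: U2 :|: U3.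
  apply/subsetP => c cB.
  case: (boolP [disjoint c & H]) => dcH; last first.
    move: dcH; rewrite -setI_eq0 => /set0Pn [h]; rewrite inE => /andP[hc hH].
    rewrite !inE; apply/orP; left; apply/orP; left.
    by apply/bigcupP; exists h => //; rewrite inE cB hc.
  have := meetb c cB dcH; rewrite -setI_eq0 => /set0Pn [x]; rewrite inE => /andP[xc xb].
  have xS : x \in cover P by apply: mem_cover bP xb.
  case: (boolP (c :&: cover P == [set x])) => e.
    rewrite !inE; apply/orP; left; apply/orP; right.
    by apply/bigcupP; exists x => //; rewrite inE cB e.
  have xcS : x \in c :&: cover P by rewrite inE xc xS.
  have [y] := other_pt xcS e; rewrite inE => /andP[yc yS] yx.
  rewrite !inE; apply/orP; right.
  apply/bigcupP; exists x => //; apply/bigcupP; exists y; first by rewrite !inE yx yS.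
  by rewrite inE cB subUset !sub1set xc yc.
have c1 : 3 * #|U1| <= 4 * (v - 1).
  rewrite -h4; apply: leq_trans (star_sum H g); rewrite leq_mul2l /=.
  exact: card_bigcup_le.
have c2 : #|U2| <= 15.
  apply: leq_trans (card_bigcup_le _ _) _.
  apply: leq_trans (block_sum g bP).
  rewrite (eq_bigl (fun x => (x \in b) && (x \notin H))) //.
  move=> x; case xb: (x \in b) => //=; apply/esym/negP => xH.
  by move/disjP: dbH => /(_ x xb xH).
have c3 : #|U3| <= 76.
  apply: leq_trans (card_bigcup_le _ _) _.
  apply: (@leq_trans (\sum_(x in b) 19)); last first.
    by rewrite sum_nat_const (blk_card g bB).
  apply: leq_sum => x xb.
  apply: leq_trans (card_bigcup_le _ _) _.
  apply: (@leq_trans (\sum_(y in cover P :\ x) 1)).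
    apply: leq_sum => y; rewrite !inE => /andP[yx _]; apply: (pblk_le1 g).
    by rewrite cards2 eq_sym yx.
  rewrite sum1_card.
  have xS : x \in cover P by apply: mem_cover bP xb.
  have e := cardsD1 x (cover P); rewrite xS in e.
  exact: ar4 e (cover_card g).
have := card_U3 sub; lia.
Qed.

Lemma caseC v (B P : {set {set 'I_v}}) : good B P -> #|Hv B P| <= 3 ->
  3 * #|B| <= #|Hv B P| * (v - 1) + 225 + 3 * 'C(#|cover P :\: Hv B P|, 2).
Proof.
move=> g h3; have [_ PB pP cP _] := gP g.
set H := Hv B P.
set D := [set X : {set 'I_v} | X \subset cover P :\: H & #|X| == 2].
set U1 := \bigcup_(h in H) star B h.
set U2 := \bigcup_(x in cover P :\: H) Aset B P x.
set U3 := \bigcup_(X in D) pblk B X.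
have sub : B \subset U1 :|: U2 :|: U3.
  apply/subsetP => c cB.
  case: (boolP [disjoint c & H]) => dcH; last first.
    move: dcH; rewrite -setI_eq0 => /set0Pn [h]; rewrite inE => /andP[hc hH].
    rewrite !inE; apply/orP; left; apply/orP; left.
    by apply/bigcupP; exists h => //; rewrite inE cB hc.
  have cH : forall p, p \in c -> p \notin H.
    by move=> p pc; apply/negP => pH; move/disjP: dcH => /(_ p pc pH).
  have := meetS g cB; rewrite -card_gt0 => hpos.
  case: (ltnP 1 #|c :&: cover P|) => h2; last first.
    have /cards1P [x ex] : #|c :&: cover P| == 1 by rewrite eqn_leq h2 hpos.
    have : x \in c :&: cover P by rewrite ex set11.
    rewrite inE => /andP[xc xS].
    rewrite !inE; apply/orP; left; apply/orP; right.
    apply/bigcupP; exists x; first by rewrite inE xS cH.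
    by rewrite inE cB ex eqxx.
  have [X sX cX] := sub_card h2.
  rewrite !inE; apply/orP; right.
  apply/bigcupP; exists X.
    rewrite inE cX eqxx andbT; apply/subsetP => p /(subsetP sX).
    by move=> /setIP[pc pS]; apply/setDP; split; [exact: pS | exact: cH].
  by rewrite inE cB (subset_trans sX) ?subsetIl.
have c1 : 3 * #|U1| <= #|H| * (v - 1).
  apply: leq_trans (star_sum H g); rewrite leq_mul2l /=.
  exact: card_bigcup_le.
have c2 : #|U2| <= 75.
  apply: leq_trans (card_bigcup_le _ _) _.
  have tP : trivIset P.
    apply/trivIsetP => b b' bP b'P ne; move/ppcP: pP; apply => //.
  have -> : \sum_(x in cover P :\: H) #|Aset B P x| =
            \sum_(x in cover P | x \notin H) #|Aset B P x|.
    by apply: eq_bigl => x; rewrite !inE andbC.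
  rewrite (big_trivIset_cond _ tP) /=.
  apply: (@leq_trans (\sum_(b in P) 15)); last by rewrite sum_nat_const cP.
  by apply: leq_sum => b bP; apply: block_sum.
have c3 : #|U3| <= 'C(#|cover P :\: H|, 2).
  apply: leq_trans (card_bigcup_le _ _) _.
  rewrite -cards_draws -sum1_card; apply: leq_sum => X; rewrite inE => /andP[_ /eqP cX].
  by apply: (pblk_le1 g); rewrite cX.
have := card_U3 sub; lia.
Qed.

Lemma arithC m n v b : m <= 3 -> n + m <= 20 -> 360 <= v ->
  3 * b <= m * (v - 1) + 225 + 3 * 'C(n, 2) -> b <= (5 * v - 15) %/ 3.
Proof.
move=> hm hn hv hb.
have hC : 'C(n, 2) <= 'C(20 - m, 2) by apply: leq_bin2l; lia.
move: hm hb hC; case: m {hn} => [|[|[|[|m]]]] //= _.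
- rewrite subn0 (_ : 'C(20, 2) = 190) //; lia.
- rewrite (_ : 'C(19, 2) = 171) //; lia.
- rewrite (_ : 'C(18, 2) = 153) //; lia.
- rewrite (_ : 'C(17, 2) = 136) //; lia.
Qed.

Lemma upper v (B : {set {set 'I_v}}) : 360 <= v -> packing 4 B -> max_ppc_size B 5 ->
  #|B| <= (5 * v - 15) %/ 3.
Proof.
move=> hv pk /andP[/existsP [P /and3P[PB pP /eqP cP]] n6].
have g : good B P by rewrite /good pk PB pP cP eqxx n6.
case: (ltnP 4 #|Hv B P|) => h.
  have [H5 sH5 c5] := sub_card h.
  have := caseA g sH5 c5; lia.
case: (ltnP 3 #|Hv B P|) => h'.
  have e : #|Hv B P| = 4 by lia.
  have := caseB g e; lia.
apply: (arithC h' _ hv (caseC g h')).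
have sH : Hv B P \subset cover P by apply/subsetP => x /Hv_prop [].
rewrite cardsD (setIidPr sH); have := cover_card g; lia.
Qed.

Definition wrp m u := if u < m then u else u - m.

Lemma wrapP m u : (u < m /\ wrp m u = u) \/ (m <= u /\ wrp m u = u - m).
Proof. rewrite /wrp; case: (ltnP u m) => h'; lia. Qed.

Lemma wrap_lt m u : u < m + m -> wrp m u < m.
Proof. move=> h; rewrite /wrp; case: (ltnP u m) => h'; lia. Qed.

Definition L m k a := [:: k; 5 + a; 5 + m + wrp m (a + k); 5 + m + m + wrp m (a + k + k)].

Lemma memL m k a u : u \in L m k a ->
  u = k \/ u = 5 + a \/ u = 5 + m + wrp m (a + k) \/ u = 5 + m + m + wrp m (a + k + k).
Proof. by rewrite !inE => /or4P[] /eqP; tauto. Qed.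

Lemma pos_match m k a k' a' u : 10 <= m -> k < 5 -> k' < 5 -> a < m -> a' < m ->
  u \in L m k a -> u \in L m k' a' ->
  (u = k /\ k = k') \/ (u = 5 + a /\ a = a') \/
  (u = 5 + m + wrp m (a + k) /\ wrp m (a + k) = wrp m (a' + k')) \/
  (u = 5 + m + m + wrp m (a + k + k) /\ wrp m (a + k + k) = wrp m (a' + k' + k')).
Proof.
move=> hm hk hk' ha ha' /memL u1 /memL u2.
have w1 := @wrap_lt m (a + k) ltac:(lia).
have w2 := @wrap_lt m (a + k + k) ltac:(lia).
have w3 := @wrap_lt m (a' + k') ltac:(lia).
have w4 := @wrap_lt m (a' + k' + k') ltac:(lia).
move: (wrp m (a + k)) (wrp m (a + k + k)) (wrp m (a' + k')) (wrp m (a' + k' + k')) w1 w2 w3 w4 u1 u2.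
move=> W1 W2 W3 W4; lia.
Qed.

Lemma key m k a k' a' : 10 <= m -> k < 5 -> k' < 5 -> a < m -> a' < m ->
  let E0 := k = k' in let E1 := a = a' in
  let E2 := wrp m (a + k) = wrp m (a' + k') in
  let E3 := wrp m (a + k + k) = wrp m (a' + k' + k') in
  (E0 /\ E1) \/ (E0 /\ E2) \/ (E0 /\ E3) \/ (E1 /\ E2) \/ (E1 /\ E3) \/ (E2 /\ E3) ->
  k = k' /\ a = a'.
Proof.
move=> hm hk hk' ha ha' E0 E1 E2 E3.
have := wrapP m (a + k); have := wrapP m (a + k + k);
have := wrapP m (a' + k'); have := wrapP m (a' + k' + k').
rewrite /E0 /E1 /E2 /E3.
move: (wrp m (a + k)) (wrp m (a + k + k)) (wrp m (a' + k')) (wrp m (a' + k' + k')).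
move=> W1 W2 W3 W4; lia.
Qed.

Lemma two_pos m k a k' a' u w : 10 <= m -> k < 5 -> k' < 5 -> a < m -> a' < m ->
  u \in L m k a -> u \in L m k' a' -> w \in L m k a -> w \in L m k' a' -> u <> w ->
  k = k' /\ a = a'.
Proof.
move=> hm hk hk' ha ha' u1 u2 w1 w2 uw.
have := pos_match hm hk hk' ha ha' u1 u2.
have := pos_match hm hk hk' ha ha' w1 w2.
move=> hw hu.
apply: (key hm hk hk' ha ha'); simpl.
case: hu => [[? ?]|[[? ?]|[[? ?]|[? ?]]]]; case: hw => [[? ?]|[[? ?]|[[? ?]|[? ?]]]];
  first [ (exfalso; lia) | tauto ].
Qed.

Definition blkset v (s : seq nat) : {set 'I_v} := [set x : 'I_v | val x \in s].

Lemma card_blkset v (s : seq nat) : uniq s -> all (fun i => i < v) s ->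
  #|blkset v s| = size s.
Proof.
elim: s => [|i s IH] /=; first by move=> _ _; apply/eqP; rewrite cards_eq0; apply/eqP/setP => x; rewrite !inE.
case/andP=> nis us /andP[iv alls].
have -> : blkset v (i :: s) = (Ordinal iv) |: blkset v s.
  by apply/setP => x; rewrite !inE -val_eqE.
by rewrite cardsU1 IH // inE /= nis.
Qed.

Definition blk v m k a := blkset v (L m k a).
Definition Q0 v := blkset v [:: 0; 1; 2; 3].
Definition Bc v m : {set {set 'I_v}} :=
  Q0 v |: [set blk v m (val p.1) (val p.2) | p : 'I_5 * 'I_m].

Lemma L_ok v m k a : 10 <= m -> 3 * m + 5 <= v -> k < 5 -> a < m ->
  uniq (L m k a) /\ all (fun i => i < v) (L m k a).
Proof.
move=> hm hv hk ha.
have w1 := @wrap_lt m (a + k) ltac:(lia).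
have w2 := @wrap_lt m (a + k + k) ltac:(lia).
rewrite /L /= !inE !negb_or; split.
  move: (wrp m (a + k)) (wrp m (a + k + k)) w1 w2 => W1 W2 w1 w2.
  apply/and4P; split; first (apply/and3P; split); try (apply/andP; split); try (apply/negP => /eqP; lia); done.
move: (wrp m (a + k)) (wrp m (a + k + k)) w1 w2 => W1 W2 w1 w2.
apply/and5P; split => //; lia.
Qed.

Lemma card_blk v m k a : 10 <= m -> 3 * m + 5 <= v -> k < 5 -> a < m ->
  #|blk v m k a| = 4.
Proof. by move=> hm hv hk ha; have [u al] := L_ok hm hv hk ha; rewrite /blk card_blkset. Qed.

Lemma card_Q0 v : 5 <= v -> #|Q0 v| = 4.
Proof. by move=> hv; rewrite /Q0 card_blkset //= !(leq_trans _ hv). Qed.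

Lemma Bc_cases v m b : b \in Bc v m ->
  b = Q0 v \/ exists k a, [/\ k < 5, a < m & b = blk v m k a].
Proof.
rewrite !inE => /orP[/eqP -> | /imsetP [[k a] _ ->]]; first by left.
by right; exists (val k), (val a); split => //; apply: ltn_ord.
Qed.

Lemma mem_blkset v s (x : 'I_v) : (x \in blkset v s) = (val x \in s).
Proof. by rewrite inE. Qed.

Lemma small_in_L m k a u : u < 5 -> u \in L m k a -> u = k.
Proof. move=> hu /memL. move: (wrp m (a + k)) (wrp m (a + k + k)) => W1 W2. lia. Qed.

Lemma same_blk v m b b' (x y : 'I_v) : 10 <= m -> x != y ->
  b \in Bc v m -> b' \in Bc v m -> x \in b -> y \in b -> x \in b' -> y \in b' -> b = b'.
Proof.
move=> hm xy hb hb'.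
have vxy : val x <> val y by move=> e; move/eqP: xy; apply; apply: val_inj.
have Q0blk : forall k a, x \in Q0 v -> y \in Q0 v -> x \in blk v m k a -> y \in blk v m k a -> False.
  move=> k a; rewrite /Q0 /blk !mem_blkset => hx hy hx' hy'.
  have sx : val x < 5 by move: hx; rewrite !inE; case/or4P => /eqP ->.
  have sy : val y < 5 by move: hy; rewrite !inE; case/or4P => /eqP ->.
  by apply: vxy; rewrite (small_in_L sx hx') (small_in_L sy hy').
case: (Bc_cases hb) => [-> | [k [a [hk ha ->]]]];
  case: (Bc_cases hb') => [-> | [k' [a' [hk' ha' ->]]]] // xb yb xb' yb'.
- by case: (Q0blk k' a' xb yb xb' yb').
- by case: (Q0blk k a xb' yb' xb yb).
move: xb yb xb' yb'; rewrite /blk !mem_blkset => xb yb xb' yb'.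
by have [-> ->] := two_pos hm hk hk' ha ha' xb xb' yb yb' vxy.
Qed.

Lemma pack_Bc v m : 10 <= m -> 3 * m + 5 <= v -> packing 4 (Bc v m).
Proof.
move=> hm hv; apply/andP; split.
  apply/forall_inP => b /Bc_cases [-> | [k [a [hk ha ->]]]].
    by rewrite card_Q0 //; lia.
  by rewrite card_blk.
apply/forallP => x; apply/forallP => y; apply/implyP => xy.
apply/card_le1_eqP => b b' /setIdP[hb /andP[xb yb]] /setIdP[hb' /andP[xb' yb']].
exact: (same_blk hm xy hb' hb xb' yb' xb yb).
Qed.


Lemma wrp_id m u : u < m -> wrp m u = u.
Proof. by move=> h; rewrite /wrp h. Qed.

Lemma pt_in v m k a : 3 * m + 5 <= v -> k < 5 -> a < m ->
  (exists x : 'I_v, val x = k /\ x \in blk v m k a) /\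
  (exists y : 'I_v, val y = 5 + a /\ y \in blk v m k a).
Proof.
move=> hv hk ha; split.
  have kv : k < v by lia.
  by exists (Ordinal kv); split => //; rewrite /blk mem_blkset /= inE eqxx.
have av : 5 + a < v by lia.
by exists (Ordinal av); split => //; rewrite /blk mem_blkset /= !inE eqxx orbT.
Qed.

Lemma blk_inj v m k a k' a' : 10 <= m -> 3 * m + 5 <= v -> k < 5 -> a < m ->
  k' < 5 -> a' < m -> blk v m k a = blk v m k' a' -> k = k' /\ a = a'.
Proof.
move=> hm hv hk ha hk' ha' e.
have [[x [vx xb]] [y [vy yb]]] := pt_in hv hk ha.
move: xb yb; rewrite e /blk !mem_blkset vx vy => xb yb.
have kk := small_in_L hk xb; split => //.
have yb0 : 5 + a \in L m k a by rewrite !inE eqxx orbT.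
have := pos_match hm hk hk' ha ha' yb0 yb.
move: (wrp m (a + k)) (wrp m (a + k + k)) (wrp m (a' + k')) (wrp m (a' + k' + k')).
move=> W1 W2 W3 W4; lia.
Qed.

Lemma not_Q0 v m k a : 5 <= v -> blk v m k a != Q0 v.
Proof.
move=> hv; apply/negP => /eqP e.
have z : 0 < v by lia.
have o : 1 < v by lia.
have h0 : Ordinal z \in blk v m k a by rewrite e /Q0 mem_blkset.
have h1 : Ordinal o \in blk v m k a by rewrite e /Q0 mem_blkset.
move: h0 h1; rewrite /blk !mem_blkset /= => h0 h1.
by have := small_in_L (isT : 0 < 5) h0; have := small_in_L (isT : 1 < 5) h1; lia.
Qed.

Lemma card_Bc v m : 10 <= m -> 3 * m + 5 <= v -> #|Bc v m| = 1 + 5 * m.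
Proof.
move=> hm hv; rewrite /Bc cardsU1.
have -> : Q0 v \notin [set blk v m (val p.1) (val p.2) | p : 'I_5 * 'I_m].
  apply/imsetP => -[p _ e]; have hv5 : 5 <= v by lia.
  by move: (not_Q0 m (val p.1) (val p.2) hv5); rewrite -e eqxx.
rewrite card_imset; first by rewrite card_prod !card_ord.
move=> [k a] [k' a'] /= e.
have [e1 e2] := blk_inj hm hv (ltn_ord k) (ltn_ord a) (ltn_ord k') (ltn_ord a') e.
by congr (_, _); apply: val_inj.
Qed.

Lemma disjP' (T : finType) (A B : {set T}) :
  reflect (forall x, x \in A -> x \in B -> False) [disjoint A & B].
Proof.
rewrite -setI_eq0; apply: (iffP eqP) => [h x xa xb | h].
  have : x \in A :&: B by rewrite inE xa xb.
  by rewrite h inE.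
apply/setP => x; rewrite !inE; apply/negbTE/negP => /andP[]; exact: h.
Qed.

Lemma has5 v m : 50 <= m -> 3 * m + 5 <= v -> has_ppc (Bc v m) 5.
Proof.
move=> hm hv.
have hm10 : 10 <= m by lia.
set P5 := [set blk v m (nat_of_ord k) (10 * nat_of_ord k) | k : 'I_5].
have lt : forall k : 'I_5, 10 * nat_of_ord k < m by move=> k; have := ltn_ord k; lia.
apply/existsP; exists P5; apply/and3P; split.
- apply/subsetP => b /imsetP [k _ ->]; rewrite /Bc inE; apply/orP; right.
  by apply/imsetP; exists (k, Ordinal (lt k)).
- apply/forall_inP => b1 /imsetP [k _ ->]; apply/forall_inP => b2 /imsetP [k' _ ->].
  apply/implyP => ne; apply/disjP' => x; rewrite /blk !mem_blkset => h1 h2.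
  have := pos_match hm10 (ltn_ord k) (ltn_ord k') (lt k) (lt k') h1 h2.
  rewrite !wrp_id; try (have := ltn_ord k; have := ltn_ord k'; lia).
  move=> hh; have ekk : k = k' by apply: val_inj => /=; lia.
  by move/negP: ne; apply; rewrite ekk.
- rewrite card_imset ?card_ord // => k k' e.
  have [e1 _] := blk_inj hm10 hv (ltn_ord k) (lt k) (ltn_ord k') (lt k') e.
  exact: val_inj.
Qed.

Lemma no6_Bc v m : 10 <= m -> 3 * m + 5 <= v -> ~~ has_ppc (Bc v m) 6.
Proof.
move=> hm hv; apply/negP => /existsP [Q /and3P [QB pQ /eqP cQ]].
set X5 := blkset v [:: 0; 1; 2; 3; 4].
have c5 : #|X5| = 5.
  rewrite card_blkset //=; apply/and5P; split; try lia; rewrite andbT; lia.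
have hs : \sum_(b in Q) #|b :&: X5| <= #|X5|.
  apply: sum_disj; last by move=> b _; apply: subsetIr.
  move=> b b' bQ b'Q ne.
  have /forall_inP/(_ _ b'Q)/implyP/(_ ne) := (forall_inP pQ) _ bQ.
  move=> d; apply/disjP' => p; rewrite !inE => /andP[pb _] /andP[pb' _].
  by move/disjP': d => /(_ p pb pb').
have he : forall b, b \in Q -> 0 < #|b :&: X5|.
  move=> b bQ; have := subsetP QB _ bQ; case/Bc_cases => [-> | [k [a [hk ha ->]]]].
    have z : 0 < v by lia.
    by apply/card_gt0P; exists (Ordinal z); rewrite inE /Q0 !mem_blkset.
  have kv : k < v by lia.
  apply/card_gt0P; exists (Ordinal kv); rewrite inE /blk !mem_blkset /= !inE eqxx /=.
  by move: hk; case: k {kv} => [|[|[|[|[|k]]]]].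
have : \sum_(b in Q) 1 <= \sum_(b in Q) #|b :&: X5| by apply: leq_sum.
rewrite sum1_card cQ; move: hs; rewrite c5; lia.
Qed.

Lemma lower v : 360 <= v -> 1 + 5 * ((v - 5) %/ 3) <= beta 5 v 4.
Proof.
move=> hv; set m := (v - 5) %/ 3.
have hm : 50 <= m by rewrite /m; lia.
have hm10 : 10 <= m by lia.
have hvm : 3 * m + 5 <= v by rewrite /m; lia.
rewrite -(card_Bc hm10 hvm) /beta.
apply: (@leq_bigmax_cond _ (fun B => packing 4 B && max_ppc_size B 5) (fun B => #|B|) (Bc v m)).
by rewrite pack_Bc //= /max_ppc_size has5 //= no6_Bc.
Qed.


Unset Implicit Arguments.

(* The divisions in the lower bounds are exact in each residue class. *)
Theorem theorem4p5 (v : nat) (hv : 360 <= v) :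
  beta 5 v 4 <= (5 * v - 15) %/ 3 /\
  (v %% 3 = 0 -> (5 * v - 27) %/ 3 <= beta 5 v 4) /\
  (v %% 3 = 1 -> (5 * v - 32) %/ 3 <= beta 5 v 4) /\
  (v %% 3 = 2 -> (5 * v - 22) %/ 3 <= beta 5 v 4).
Proof.
have lo := lower hv.
split.
  apply/bigmax_leqP => B /andP[pk mx].
  exact: upper hv pk mx.
split; [move=> h | split => h]; apply: leq_trans lo; lia.
Qed.
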